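(* Let $G,H,K$ be pro-oligomorphic groups with $G$ split, and let $\Phi:\mathbf{S}(G)\to\mathbf{S}(K)$ and $\Psi:\mathbf{S}(H)\to\mathbf{S}(K)$ be exact functors. Suppose that $\Phi(X)\times\Psi(Y)$ is a transitive $K$-set whenever $X\in\mathbf{S}(G)$ and $Y\in\mathbf{S}(H)$ are transitive. Let $X$ be a transitive $G$-set, $Y$ a transitive $H$-set, and $Z$ a quotient of the $K$-set $\Phi(X)\times\Psi(Y)$. Then there exist a quotient $X'$ of $X$ and a quotient $Y'$ of $Y$ such that $Z\cong\Phi(X')\times\Psi(Y')$.
   Context: A pro-oligomorphic group is a Hausdorff topological group in which open subgroups form a neighborhood basis of the identity and $U\backslash G/V$ is finite for all open subgroups $U,V$. $\mathbf{S}(G)$ is the category of $G$-sets, i.e. sets with an action having open stabilizers and finitely many orbits, with $G$-equivariant maps; it has finite limits and colimits, computed on underlying sets. A functor between such categories is exact if it commutes with finite limits and finite colimits. $G$ is split if for every pro-oligomorphic $H$, every transitive $(G\times H)$-set is isomorphic to $X\times Y$ with $X$ a transitive $G$-set and $Y$ a transitive $H$-set. A quotient of a $K$-set $W$ is a $K$-set $Z$ together with a surjective $K$-map $W\to Z$. *)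

(* Defs.v *)
From HB Require Import structures.
From mathcomp Require Import all_boot all_order all_algebra.
From mathcomp Require Import all_classical topology.
From Stdlib Require List.
Set Implicit Arguments. Unset Strict Implicit. Unset Printing Implicit Defensive.
Local Open Scope classical_set_scope.

(* Raw topological-group data: a topological space with group operations.
   The axioms are imposed separately by [is_pro_oligomorphic]. *)
Record topGrp := TopGrp {
  tg_car : topologicalType;
  tg_mul : tg_car -> tg_car -> tg_car;
  tg_one : tg_car;
  tg_inv : tg_car -> tg_car }.
Coercion tg_car : topGrp >-> topologicalType.

Definition is_subgroup (G : topGrp) (V : set G) : Prop :=
  V (tg_one G) /\ forall x y, V x -> V y -> V (tg_mul x (tg_inv y)).

Definition open_subgroup (G : topGrp) (V : set G) : Prop :=
  open V /\ is_subgroup V.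

Definition is_pro_oligomorphic (G : topGrp) : Prop :=
      (forall x y z : G, tg_mul x (tg_mul y z) = tg_mul (tg_mul x y) z) /\
      (forall x : G, tg_mul (tg_one G) x = x) /\
      (forall x : G, tg_mul (tg_inv x) x = tg_one G) /\
      continuous (fun p : G * G => tg_mul p.1 p.2) /\ continuous (@tg_inv G) /\
      hausdorff_space G /\
      (forall U : set G, nbhs (tg_one G) U ->
         exists V : set G, open_subgroup V /\ V `<=` U) /\
      (forall U V : set G, open_subgroup U -> open_subgroup V ->
         exists s : seq G, forall x : G, exists g, List.In g s /\
           exists u v, U u /\ V v /\ x = tg_mul (tg_mul u g) v).

Definition prod_topGrp (G H : topGrp) : topGrp :=
  @TopGrp (G * H)%type
    (fun p q => (tg_mul p.1 q.1, tg_mul p.2 q.2))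
    (tg_one G, tg_one H)
    (fun p => (tg_inv p.1, tg_inv p.2)).

Record gset (G : topGrp) := GSet {
  gs_car :> Type;
  gs_act : G -> gs_car -> gs_car;
  gs_act1 : forall x, gs_act (tg_one G) x = x;
  gs_actM : forall g h x, gs_act g (gs_act h x) = gs_act (tg_mul g h) x;
  gs_open_stab : forall x, open [set g | gs_act g x = x];
  gs_fin_orbits : exists s : seq gs_car,
      forall x, exists y, List.In y s /\ exists g, x = gs_act g y }.
Arguments gs_act {G} X g x : rename.

(* Morphisms of S(G): G-equivariant maps. Equality of morphisms is
   pointwise equality of the underlying maps. *)
Record gmap (G : topGrp) (X Y : gset G) := GMap {
  gm_fun :> X -> Y;
  gm_equiv : forall g x, gm_fun (gs_act X g x) = gs_act Y g (gm_fun x) }.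

Definition gmap_id (G : topGrp) (X : gset G) : gmap X X :=
  @GMap G X X id (fun g x => erefl).

Definition gmap_comp (G : topGrp) (X Y Z : gset G) (g : gmap Y Z) (f : gmap X Y)
  : gmap X Z.
Proof.
refine (@GMap G X Z (fun x => g (f x)) _).
by move=> k x; rewrite gm_equiv gm_equiv.
Defined.

Definition transitive_action (A T : Type) (act : A -> T -> T) : Prop :=
  (exists x : T, True) /\ forall x y : T, exists a, act a x = y.

Definition transitive_gset (G : topGrp) (X : gset G) : Prop :=
  transitive_action (gs_act X).

Definition is_terminal (G : topGrp) (T : gset G) : Prop :=
  forall X : gset G, exists f : gmap X T,
    forall f' : gmap X T, forall x, f' x = f x.

Definition is_initial (G : topGrp) (I : gset G) : Prop :=
  forall X : gset G, exists f : gmap I X,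
    forall f' : gmap I X, forall x, f' x = f x.

Definition is_pullback (G : topGrp) (X Y Z P : gset G)
  (f : gmap X Z) (g : gmap Y Z) (p1 : gmap P X) (p2 : gmap P Y) : Prop :=
  (forall p, f (p1 p) = g (p2 p)) /\
  forall (T : gset G) (a : gmap T X) (b : gmap T Y),
    (forall t, f (a t) = g (b t)) ->
    exists u : gmap T P,
      ((forall t, p1 (u t) = a t) /\ (forall t, p2 (u t) = b t)) /\
      forall u' : gmap T P,
        (forall t, p1 (u' t) = a t) -> (forall t, p2 (u' t) = b t) ->
        forall t, u' t = u t.

Definition is_pushout (G : topGrp) (X Y Z Q : gset G)
  (f : gmap Z X) (g : gmap Z Y) (i1 : gmap X Q) (i2 : gmap Y Q) : Prop :=
  (forall z, i1 (f z) = i2 (g z)) /\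
  forall (T : gset G) (a : gmap X T) (b : gmap Y T),
    (forall z, a (f z) = b (g z)) ->
    exists u : gmap Q T,
      ((forall x, u (i1 x) = a x) /\ (forall y, u (i2 y) = b y)) /\
      forall u' : gmap Q T,
        (forall x, u' (i1 x) = a x) -> (forall y, u' (i2 y) = b y) ->
        forall q, u' q = u q.

Record functor (G K : topGrp) := Functor {
  F_obj :> gset G -> gset K;
  F_map : forall X Y : gset G, gmap X Y -> gmap (F_obj X) (F_obj Y);
  F_map_id : forall (X : gset G) x, F_map (gmap_id X) x = x;
  F_map_comp : forall (X Y Z : gset G) (g : gmap Y Z) (f : gmap X Y) x,
      F_map (gmap_comp g f) x = F_map g (F_map f x) }.
Arguments F_map {G K} F {X Y} f : rename.

(* Exact = commutes with finite limits and finite colimits; finite limits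
   (resp. colimits) are generated by the terminal object and pullbacks
   (resp. initial object and pushouts). *)
Definition preserves_finite_limits (G K : topGrp) (F : functor G K) : Prop :=
  (forall T : gset G, is_terminal T -> is_terminal (F T)) /\
  (forall (X Y Z P : gset G) (f : gmap X Z) (g : gmap Y Z)
          (p1 : gmap P X) (p2 : gmap P Y),
     is_pullback f g p1 p2 ->
     is_pullback (F_map F f) (F_map F g) (F_map F p1) (F_map F p2)).

Definition preserves_finite_colimits (G K : topGrp) (F : functor G K) : Prop :=
  (forall I : gset G, is_initial I -> is_initial (F I)) /\
  (forall (X Y Z Q : gset G) (f : gmap Z X) (g : gmap Z Y)
          (i1 : gmap X Q) (i2 : gmap Y Q),
     is_pushout f g i1 i2 ->
     is_pushout (F_map F f) (F_map F g) (F_map F i1) (F_map F i2)).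

Definition exact_functor (G K : topGrp) (F : functor G K) : Prop :=
  preserves_finite_limits F /\ preserves_finite_colimits F.

(* Products computed on underlying sets, with diagonal action. *)
Definition prod_act (K : topGrp) (A B : gset K) (k : K) (p : A * B) : A * B :=
  (gs_act A k p.1, gs_act B k p.2).

Definition prod2_act (G H : topGrp) (X : gset G) (Y : gset H)
  (gh : prod_topGrp G H) (p : X * Y) : X * Y :=
  (gs_act X gh.1 p.1, gs_act Y gh.2 p.2).

Definition split_group (G : topGrp) : Prop :=
  forall H : topGrp, is_pro_oligomorphic H ->
  forall W : gset (prod_topGrp G H), transitive_gset W ->
  exists (X : gset G) (Y : gset H), transitive_gset X /\ transitive_gset Y /\
    exists e : W -> X * Y, bijective e /\
      forall gh w, e (gs_act W gh w) = prod2_act gh (e w).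

(* Main.v *)
Require Import Defs.
From mathcomp Require Import all_boot all_order all_algebra.
From mathcomp Require Import all_classical topology.
From Stdlib Require List.
Set Implicit Arguments. Unset Strict Implicit. Unset Printing Implicit Defensive.
Local Open Scope classical_set_scope.


Lemma sig_eq (T : Type) (P : T -> Prop) (a b : sig P) :
  proj1_sig a = proj1_sig b -> a = b.
Proof.
case: a => a pa; case: b => b pb /= eab; subst b.
by rewrite (Prop_irrelevance pa pb).
Qed.

Lemma gmap_ext (G : topGrp) (X Y : gset G) (f g : gmap X Y) :
  (forall x, f x = g x) -> f = g.
Proof.
case: f => f pf; case: g => g pg /= efg.
have e : f = g by apply: funext.
subst g; by rewrite (Prop_irrelevance pf pg).
Qed.

Definition grp_ax (G : topGrp) : Prop :=
  (forall x y z : G, tg_mul x (tg_mul y z) = tg_mul (tg_mul x y) z) /\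
  (forall x : G, tg_mul (tg_one G) x = x) /\
  (forall x : G, tg_mul (tg_inv x) x = tg_one G).

Lemma po_grp (G : topGrp) : is_pro_oligomorphic G -> grp_ax G.
Proof. by case=> a [b [c _]]; split=> //; split. Qed.

Section GrpLemmas.
Variable G : topGrp.
Hypothesis hg : grp_ax G.

Lemma tmulgV (x : G) : tg_mul x (tg_inv x) = tg_one G.
Proof.
case: hg => mA [m1 mV].
rewrite -[tg_mul x _]m1 -(mV (tg_inv x)) -mA [tg_mul (tg_inv x) _]mA mV m1.
by rewrite mV.
Qed.

Lemma tmulg1 (x : G) : tg_mul x (tg_one G) = x.
Proof. case: hg => mA [m1 mV]. by rewrite -(mV x) mA tmulgV m1. Qed.

Lemma act_invK (A : gset G) g (x : A) : gs_act A (tg_inv g) (gs_act A g x) = x.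
Proof. case: hg => mA [m1 mV]. by rewrite gs_actM mV gs_act1. Qed.

Lemma act_Kinv (A : gset G) g (x : A) : gs_act A g (gs_act A (tg_inv g) x) = x.
Proof. by rewrite gs_actM tmulgV gs_act1. Qed.

End GrpLemmas.


Section Orb.
Variables (G : topGrp) (T : Type) (act : G -> T -> T).
Hypotheses (h1 : forall x, act (tg_one G) x = x)
  (hM : forall g h x, act g (act h x) = act (tg_mul g h) x)
  (hO : forall x, open [set g | act g x = x]).
Variable a : T.

Definition orb_car := {y : T | exists g, y = act g a}.
Definition orb_act (g : G) (y : orb_car) : orb_car.
Proof.
exists (act g (proj1_sig y)).
case: y => y [h eh] /=; exists (tg_mul g h); by rewrite eh hM.
Defined.

Definition orbgs : gset G.
Proof.
refine (@GSet G orb_car orb_act _ _ _ _).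
- by move=> x; apply: sig_eq; rewrite /= h1.
- by move=> g h x; apply: sig_eq; rewrite /= hM.
- move=> x; have -> : [set g | orb_act g x = x] = [set g | act g (proj1_sig x) = proj1_sig x].
    apply: funext => g; apply: propext; split; first by move=> /(f_equal (@proj1_sig _ _)).
    by move=> e; apply: sig_eq.
  exact: hO.
- have pa : exists g, a = act g a by exists (tg_one G); rewrite h1.
  exists [:: exist _ a pa] => -[y [g ey]].
  exists (exist _ a pa); split; first by left.
  by exists g; apply: sig_eq.
Defined.

Definition orb_pt : orbgs := exist _ a (ex_intro _ (tg_one G) (esym (h1 a))).

Lemma orbgs_trans (hg : grp_ax G) : transitive_gset orbgs.
Proof.
split; first by exists orb_pt.
move=> [x [g ex]] [y [h ey]]; exists (tg_mul h (tg_inv g)).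
apply: sig_eq => /=. case: hg => mA [m1 mV].
by rewrite ex ey hM -mA mV tmulg1.
Qed.
End Orb.

Section Sub.
Variables (G : topGrp) (hg : grp_ax G) (A : gset G) (P : A -> Prop).
Hypothesis hP : forall g x, P x -> P (gs_act A g x).

Definition sub_act (g : G) (x : {x : A | P x}) : {x : A | P x} :=
  exist _ (gs_act A g (proj1_sig x)) (hP g (proj2_sig x)).

Definition subgs : gset G.
Proof.
refine (@GSet G {x : A | P x} sub_act _ _ _ _).
- by move=> x; apply: sig_eq; rewrite /= gs_act1.
- by move=> g h x; apply: sig_eq; rewrite /= gs_actM.
- move=> x; have -> : [set g | sub_act g x = x] = [set g | gs_act A g (proj1_sig x) = proj1_sig x].
    apply: funext => g; apply: propext; split; first by move=> /(f_equal (@proj1_sig _ _)).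
    by move=> e; apply: sig_eq.
  exact: gs_open_stab.
- case: (gs_fin_orbits A) => s hs.
  exists (List.flat_map (fun y => match pselect (P y) with
                           | left h => [:: exist P y h] | right _ => [::] end) s).
  move=> [x px]; case: (hs x) => y [ys [g exy]].
  have py : P y by have := hP (tg_inv g) px; rewrite exy act_invK.
  exists (exist P y py); split.
    apply/List.in_flat_map; exists y; split => //.
    case: pselect => [h|//]; left; by apply: sig_eq.
  by exists g; apply: sig_eq.
Defined.

Definition sub_incl : gmap subgs A := @GMap G subgs A (@proj1_sig _ _) (fun g x => erefl).
End Sub.


Lemma cont_pair_l (T U : topologicalType) (c : T) : continuous (fun y : U => (c, y)).
Proof.
move=> y P /= [[A B] [nA nB] sub]; apply: filterS nB => z Bz.
by apply: sub; split => //=; exact: nbhs_singleton.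
Qed.

Lemma open_setX' (T U : topologicalType) (A : set T) (B : set U) :
  open A -> open B -> open (A `*` B).
Proof.
rewrite !openE => oA oB [a b] [/= Aa Bb].
exists (A, B) => //; split; [exact: oA | exact: oB].
Qed.

Definition transl (G : topGrp) (g : G) (V : set G) : set G :=
  [set y | exists v, V v /\ y = tg_mul g v].

Lemma transl_open (G : topGrp) (hG : is_pro_oligomorphic G) (g : G) (V : set G) :
  open V -> open (transl g V).
Proof.
have hg := po_grp hG.
case: hG => _ [_ [_ [cm _]]] oV.
have -> : transl g V = (fun y => (tg_inv g, y)) @^-1` ((fun p : G * G => tg_mul p.1 p.2) @^-1` V).
  apply: funext => y; apply: propext; split.
    move=> [v [Vv ->]] /=. case: hg => mA [m1 mV]. by rewrite mA mV m1.
  move=> /= Vy; exists (tg_mul (tg_inv g) y); split => //.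
  case: hg => mA [m1 mV]. by rewrite mA tmulgV // m1.
move: (@cont_pair_l G G (tg_inv g)) => /continuousP; apply.
by move: cm => /continuousP; apply.
Qed.

Section Quot.
Variables (G : topGrp) (hg : grp_ax G) (A : gset G) (R : A -> A -> Prop).
Hypotheses (Rrefl : forall x, R x x) (Rsym : forall x y, R x y -> R y x)
  (Rtr : forall x y z, R x y -> R y z -> R x z)
  (Rinv : forall g x y, R x y -> R (gs_act A g x) (gs_act A g y))
  (htr : forall (x : A) (g : G), open (transl g [set h | gs_act A h x = x])).

Lemma Req x y : (R x = R y) <-> R x y.
Proof.
split; first by move=> ->; apply: Rrefl.
move=> rxy; apply: funext => z; apply: propext; split.
  by apply: Rtr; apply: Rsym.
by apply: Rtr.
Qed.

Definition quot_car := {P : A -> Prop | exists x, P = R x}.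
Definition qrep (P : quot_car) : A := proj1_sig (cid (proj2_sig P)).
Lemma qrepE P : proj1_sig P = R (qrep P).
Proof. rewrite /qrep; case: cid => x /= ->. by []. Qed.

Definition qcls (x : A) : quot_car := exist _ (R x) (ex_intro _ x erefl).
Definition quot_act (g : G) (P : quot_car) : quot_car := qcls (gs_act A g (qrep P)).

Lemma qcls_eq x y : qcls x = qcls y <-> R x y.
Proof.
split; first by move=> /(f_equal (@proj1_sig _ _)) /= /Req.
by move=> /Req e; apply: sig_eq.
Qed.

Lemma qrep_cls x : R (qrep (qcls x)) x.
Proof. apply/Req; rewrite -qrepE. by []. Qed.

Lemma quot_act_cls g x : quot_act g (qcls x) = qcls (gs_act A g x).
Proof. by apply/qcls_eq; apply: Rinv; apply: qrep_cls. Qed.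

Lemma qcls_rep P : qcls (qrep P) = P.
Proof. by apply: sig_eq; rewrite /= -qrepE. Qed.

Definition quotgs : gset G.
Proof.
refine (@GSet G quot_car quot_act _ _ _ _).
- by move=> P; rewrite /quot_act gs_act1 qcls_rep.
- move=> g h P; case: (qcls_rep P) => /=; set r := qrep P => _.
  by rewrite -(qcls_rep P) -/r !quot_act_cls gs_actM.
- move=> P.
  have -> : [set g | quot_act g P = P] =
     \bigcup_(g in [set g | quot_act g P = P]) transl g [set h | gs_act A h (qrep P) = qrep P].
    apply: funext => g; apply: propext; split.
      move=> hgP; exists g => //; exists (tg_one G); split; first exact: gs_act1.
      by rewrite tmulg1.
    move=> [k /= hk [v [hv ->]]].
    by rewrite /quot_act -gs_actM hv.
  by apply: bigcup_open => g _; apply: htr.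
- case: (gs_fin_orbits A) => s hs.
  exists (map qcls s) => P; case: (hs (qrep P)) => y [ys [g ey]].
  exists (qcls y); split; first by apply: List.in_map.
  exists g; by rewrite quot_act_cls -ey qcls_rep.
Defined.

Definition qmap : gmap A quotgs := @GMap G A quotgs qcls (fun g x => esym (quot_act_cls g x)).

Lemma qmap_surj (P : quotgs) : exists x, qmap x = P.
Proof. by exists (qrep P); apply: qcls_rep. Qed.

Lemma qmap_eq x y : qmap x = qmap y <-> R x y.
Proof. exact: qcls_eq. Qed.
End Quot.

Section Prod.
Variables (G : topGrp) (hG : is_pro_oligomorphic G) (X Y : gset G).
Hypotheses (hX : transitive_gset X) (hY : transitive_gset Y).

Definition prodgs : gset G.
Proof.
refine (@GSet G (X * Y)%type (@prod_act G X Y) _ _ _ _).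
- by move=> [x y]; rewrite /prod_act /= !gs_act1.
- by move=> g h [x y]; rewrite /prod_act /= !gs_actM.
- move=> [x y].
  have -> : [set g | prod_act g (x, y) = (x, y)] =
    [set g | gs_act X g x = x] `&` [set g | gs_act Y g y = y].
    apply: funext => g; apply: propext; rewrite /prod_act /=; split.
      by move=> [-> ->].
    by move=> [-> ->].
  by apply: openI; apply: gs_open_stab.
- case: hX => [[a _] tX]; case: hY => [[b _] tY].
  have sub : forall (Z : gset G) (z : Z), open_subgroup [set g | gs_act Z g z = z].
    move=> Z z; split; first exact: gs_open_stab.
    split; first exact: gs_act1.
    by move=> u v /= hu hv; rewrite -gs_actM -{1}hv act_invK ?hu //; apply: po_grp.
  case: hG => _ [_ [_ [_ [_ [_ [_ dc]]]]]].
  case: (dc _ _ (sub X a) (sub Y b)) => s hs.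
  exists (map (fun c => (a, gs_act Y c b)) s) => -[x y].
  case: (tX a x) => g1 e1; case: (tY b y) => g2 e2.
  case: (hs (tg_mul (tg_inv g1) g2)) => c [cs [u [v [/= hu [/= hv ec]]]]].
  exists (a, gs_act Y c b); split; first by apply: List.in_map.
  exists (tg_mul g1 u); rewrite /prod_act /=; congr pair.
    by rewrite -gs_actM hu.
  rewrite -{1}hv !gs_actM.
  have hg := po_grp hG.
  case: (hg) => mA [m1 mV].
  have -> : tg_mul (tg_mul (tg_mul g1 u) c) v = tg_mul g1 (tg_mul (tg_mul u c) v) by rewrite !mA.
  by rewrite -ec mA tmulgV // m1 e2.
Defined.

Definition pfst : gmap prodgs X := @GMap G prodgs X (fun p : (X * Y)%type => p.1) (fun g p => erefl).
Definition psnd : gmap prodgs Y := @GMap G prodgs Y (fun p : (X * Y)%type => p.2) (fun g p => erefl).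
End Prod.

Definition unitgs (G : topGrp) : gset G.
Proof.
refine (@GSet G unit (fun _ x => x) _ _ _ _) => //.
- move=> x; have -> : [set g : G | x = x] = setT.
    by apply: funext => g; apply: propext.
  exact: openT.
- by exists [:: tt] => -[]; exists tt; split; [left | exists (tg_one G)].
Defined.

Definition boolgs (G : topGrp) : gset G.
Proof.
refine (@GSet G bool (fun _ x => x) _ _ _ _) => //.
- move=> x; have -> : [set g : G | x = x] = setT.
    by apply: funext => g; apply: propext.
  exact: openT.
- exists [:: true; false] => b; exists b; split; last by exists (tg_one G).
  by case: b; [left | right; left].
Defined.

Lemma pa1 (G : topGrp) (A B : gset G) x : @prod_act G A B (tg_one G) x = x.
Proof. by case: x => a b; rewrite /prod_act /= !gs_act1. Qed.
Lemma paM (G : topGrp) (A B : gset G) g h x :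
  @prod_act G A B g (prod_act h x) = prod_act (tg_mul g h) x.
Proof. by case: x => a b; rewrite /prod_act /= !gs_actM. Qed.
Lemma paO (G : topGrp) (A B : gset G) x : open [set g | @prod_act G A B g x = x].
Proof.
case: x => x y.
have -> : [set g | prod_act g (x, y) = (x, y)] =
    [set g | gs_act A g x = x] `&` [set g | gs_act B g y = y].
  apply: funext => g; apply: propext; rewrite /prod_act /=; split.
    by move=> [-> ->].
  by move=> [-> ->].
by apply: openI; apply: gs_open_stab.
Qed.

Definition orbitA (G : topGrp) (A : gset G) (a : A) : gset G :=
  orbgs (@gs_act1 G A) (@gs_actM G A) (@gs_open_stab G A) a.
Definition orbitA_incl (G : topGrp) (A : gset G) (a : A) : gmap (orbitA a) A :=
  @GMap G (orbitA a) A (fun y => proj1_sig y) (fun g y => erefl).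

Definition orbitP (G : topGrp) (A B : gset G) (p : A * B) : gset G :=
  orbgs (@pa1 G A B) (@paM G A B) (@paO G A B) p.
Definition orbitP1 (G : topGrp) (A B : gset G) (p : A * B) : gmap (orbitP p) A :=
  @GMap G (orbitP p) A (fun y => (proj1_sig y).1) (fun g y => erefl).
Definition orbitP2 (G : topGrp) (A B : gset G) (p : A * B) : gmap (orbitP p) B :=
  @GMap G (orbitP p) B (fun y => (proj1_sig y).2) (fun g y => erefl).


Section KLemmas.
Variables (K : topGrp) (hk : grp_ax K).

Lemma inv_iff (D : gset K) (P : D -> Prop) :
  (forall k y, P y -> P (gs_act D k y)) -> forall k y, P (gs_act D k y) <-> P y.
Proof.
move=> hP k y; split; last exact: hP.
by move=> /(hP (tg_inv k)); rewrite act_invK.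
Qed.

Definition indgs (D : gset K) (P : D -> Prop)
  (hP : forall k y, P (gs_act D k y) <-> P y) : gmap D (boolgs K).
Proof.
refine (@GMap K D (boolgs K) (fun y => asbool (P y)) _).
by move=> k y /=; rewrite (propext (hP k y)).
Defined.

Definition constgs (D : gset K) (b : bool) : gmap D (boolgs K) :=
  @GMap K D (boolgs K) (fun _ => b) (fun k y => erefl).

Lemma initial_empty (I : gset K) : is_initial I -> I -> False.
Proof.
move=> hI x.
have hP : forall (k : K) (y : I), (fun _ : I => False) y -> (fun _ : I => False) (gs_act I k y) by [].
case: (hI (subgs hk hP)) => f _.
exact: (proj2_sig (f x)).
Qed.

Lemma pullback_elt (X Y Z P : gset K) (f : gmap X Z) (g : gmap Y Z)
  (p1 : gmap P X) (p2 : gmap P Y) : is_pullback f g p1 p2 ->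
  forall u v, f u = g v -> exists r, p1 r = u /\ p2 r = v.
Proof.
move=> [_ H] u v e.
pose O := orbitP (u, v).
have c : forall t : O, f (orbitP1 (u, v) t) = g (orbitP2 (u, v) t).
  move=> [[a b] [k ek]] /=; case: ek => -> ->.
  by rewrite !gm_equiv e.
case: (H O (orbitP1 (u, v)) (orbitP2 (u, v)) c) => w [[h1 h2] _].
exists (w (orb_pt (@pa1 K X Y) (@paM K X Y) (@paO K X Y) (u, v))).
by rewrite h1 h2.
Qed.

Lemma terminal_eq (T : gset K) : is_terminal T -> forall a b : T, a = b.
Proof.
move=> hT a b.
case: (hT (orbitP (a, b))) => f hf.
have := hf (orbitP1 (a, b)) (orb_pt (@pa1 K T T) (@paM K T T) (@paO K T T) (a, b)).
have := hf (orbitP2 (a, b)) (orb_pt (@pa1 K T T) (@paM K T T) (@paO K T T) (a, b)).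
move=> /= e1 e2; exact: (etrans e2 (esym e1)).
Qed.
End KLemmas.

Section Exact.
Variables (G K : topGrp) (hG : is_pro_oligomorphic G) (hK : is_pro_oligomorphic K).
Variables (F : functor G K) (hF : exact_functor F).
Let hg := po_grp hG.
Let hk := po_grp hK.

Lemma surj_pres (A B : gset G) (f : gmap A B) :
  (forall y, exists x, f x = y) -> forall y : F B, exists x, F_map F f x = y.
Proof.
move=> fs.
have po : is_pushout f f (gmap_id B) (gmap_id B).
  split => // T a b hab; exists a; split.
    split => // y; case: (fs y) => x <-; exact: hab.
  by move=> u' h1 h2 q; apply: h1.
case: hF => _ [_ /(_ _ _ _ _ _ _ _ _ po)] [_ H].
pose P := fun y : F B => exists x, F_map F f x = y.
have hP : forall k y, P (gs_act (F B) k y) <-> P y.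
  apply: inv_iff => // k y [x <-]; exists (gs_act (F A) k x); by rewrite gm_equiv.
case: (H (boolgs K) (indgs hP) (constgs _ true)).
  by move=> z /=; apply/asboolP; exists z.
move=> u [[h1 h2] _] y.
have := h1 y; rewrite h2 /= => /esym /asboolP; by [].
Qed.

Lemma cover2 (A : gset G) (D : A -> Prop) (hD : forall g x, D x -> D (gs_act A g x)) :
  forall (hDc : forall g x, (fun y => ~ D y) x -> (fun y => ~ D y) (gs_act A g x)) (w : F A), (exists w1, F_map F (sub_incl hg hD) w1 = w) \/
                  (exists w2, F_map F (sub_incl hg hDc) w2 = w).
Proof.
move=> hDc w0.
pose E := fun _ : A => False.
have hE : forall (g : G) (x : A), E x -> E (gs_act A g x) by [].
pose fD : gmap (subgs hg hE) (subgs hg hD) :=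
  @GMap G _ _ (fun e : subgs hg hE => False_rect _ (proj2_sig e)) (fun g (e : subgs hg hE) => False_rect _ (proj2_sig e)).
pose fDc : gmap (subgs hg hE) (subgs hg hDc) :=
  @GMap G _ _ (fun e : subgs hg hE => False_rect _ (proj2_sig e)) (fun g (e : subgs hg hE) => False_rect _ (proj2_sig e)).
have po : is_pushout fD fDc (sub_incl hg hD) (sub_incl hg hDc).
  split; first by move=> [z []].
  move=> T a b _.
  pose u := fun x : A => match pselect (D x) with
                         | left h => a (exist _ x h) | right h => b (exist _ x h) end.
  have ue : forall g x, u (gs_act A g x) = gs_act T g (u x).
    move=> g x; rewrite /u; case: pselect => h1; case: pselect => h2.
    - by rewrite -gm_equiv; congr (a _); apply: sig_eq.
    - by exfalso; exact: (h2 (proj1 (inv_iff hg hD g x) h1)).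
    - by exfalso; exact: (h1 (hD g x h2)).
    - by rewrite -gm_equiv; congr (b _); apply: sig_eq.
  exists (GMap ue); split.
    split.
      move=> [x hx] /=; rewrite /u; case: pselect => h //.
        by congr (a _); apply: sig_eq.
    move=> [y hy] /=; rewrite /u; case: pselect => h //.
    by congr (b _); apply: sig_eq.
  move=> u' h1 h2 q /=; rewrite /u; case: pselect => h.
    by rewrite -(h1 (exist _ q h)).
  by rewrite -(h2 (exist _ q h)).
case: hF => _ [_ /(_ _ _ _ _ _ _ _ _ po)] [_ H].
pose P := fun y : F A => (exists w1, F_map F (sub_incl hg hD) w1 = y) \/
                        (exists w2, F_map F (sub_incl hg hDc) w2 = y).
have hP : forall k y, P (gs_act (F A) k y) <-> P y.
  apply: inv_iff => // k y [[x <-]|[x <-]]; [left|right];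
    exists (gs_act _ k x); by rewrite gm_equiv.
case: (H (boolgs K) (constgs _ true) (constgs _ true)) => // u [_ hu].
have E1 : forall q, indgs hP q = u q.
  apply: hu.
    by move=> x /=; apply/asboolP; left; exists x.
  by move=> x /=; apply/asboolP; right; exists x.
have E2 : forall q, constgs (F A) true q = u q by apply: hu.
move: w0 => w.
have : asbool (P w) = true.
  have -> : asbool (P w) = indgs hP w by [].
  by rewrite E1 -E2.
by move/asboolP.
Qed.

End Exact.


Definition flist (T : Type) (P : T -> Prop) (s : seq T) : seq {x | P x} :=
  List.flat_map (fun y => match pselect (P y) with
                          | left h => [:: exist P y h] | right _ => [::] end) s.

Lemma flist_size (T : Type) (P : T -> Prop) (s : seq T) : size (flist P s) <= size s.
Proof.
elim: s => //= y s IH; case: pselect => h /=; first by [].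
exact: leqW.
Qed.

Lemma flist_in (T : Type) (P : T -> Prop) (s : seq T) y (h : P y) :
  List.In y s -> List.In (exist P y h) (flist P s).
Proof.
move=> ys; apply/List.in_flat_map; exists y; split => //.
case: pselect => [h'|//]; left; by apply: sig_eq.
Qed.

Lemma unit_terminal (G : topGrp) : is_terminal (unitgs G).
Proof.
move=> X; exists (@GMap G X (unitgs G) (fun _ => tt) (fun g x => erefl)).
by move=> f' x; case: (f' x).
Qed.

Lemma empty_initial (G : topGrp) (A : gset G) : (A -> False) -> is_initial A.
Proof.
move=> hA X.
exists (@GMap G A X (fun x => False_rect _ (hA x)) (fun g x => False_rect _ (hA x))).
by move=> f' x; case: (hA x).
Qed.

Section Exact2.
Variables (G K : topGrp) (hG : is_pro_oligomorphic G) (hK : is_pro_oligomorphic K).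
Variables (F : functor G K) (hF : exact_functor F).
Let hg := po_grp hG.
Let hk := po_grp hK.

Lemma prod_surj (X Y : gset G) (hX : transitive_gset X) (hY : transitive_gset Y)
  (u : F X) (v : F Y) :
  exists w : F (prodgs hG hX hY), F_map F (pfst hG hX hY) w = u /\ F_map F (psnd hG hX hY) w = v.
Proof.
pose tX := @GMap G X (unitgs G) (fun _ => tt) (fun g x => erefl).
pose tY := @GMap G Y (unitgs G) (fun _ => tt) (fun g x => erefl).
have pb : is_pullback tX tY (pfst hG hX hY) (psnd hG hX hY).
  split => // T a b _.
  have ue : forall g t, ((a (gs_act T g t), b (gs_act T g t)) : prodgs hG hX hY) =
       gs_act (prodgs hG hX hY) g (a t, b t).
    by move=> g t; rewrite !gm_equiv.
  exists (GMap ue); split => //.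
  move=> u' h1 h2 t /=; rewrite -h1 -h2.
  by case: (u' t).
case: hF => [[hT /(_ _ _ _ _ _ _ _ _ pb) pbF] _].
apply: (pullback_elt pbF).
apply: (@terminal_eq K (F (unitgs G))); apply: hT; exact: unit_terminal.
Qed.

Lemma cover_empty (A : gset G) : (A -> False) -> F A -> False.
Proof.
move=> hA w.
case: hF => _ [hI _].
exact: (initial_empty hk (hI _ (empty_initial hA)) w).
Qed.

Lemma covering_n n : forall (A : gset G) (s : seq A), size s <= n ->
  (forall x, exists y, List.In y s /\ exists g, x = gs_act A g y) ->
  forall w : F A, exists a (w' : F (orbitA a)), F_map F (orbitA_incl a) w' = w.
Proof.
elim: n => [|n IH] A s.
  case: s => // _ hs w; exfalso; apply: (cover_empty _ w) => x.
  by case: (hs x) => y [].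
case: s => [_ hs w|a s' hsz hs w].
  by exfalso; apply: (cover_empty _ w) => x; case: (hs x) => y [].
pose D := fun y => exists g, y = gs_act A g a.
have hD : forall g x, D x -> D (gs_act A g x).
  by move=> g x [h ->]; exists (tg_mul g h); rewrite gs_actM.
pose Dc := fun x : A => ~ D x.
have hDc : forall g x, Dc x -> Dc (gs_act A g x).
  move=> g x hx hgx; apply: hx; move: hgx => [h eh]; exists (tg_mul (tg_inv g) h).
  by rewrite -gs_actM -eh act_invK.
case: (cover2 hG hK hF hD hDc w) => [[w1 <-]|[w2 <-]].
  have me : forall g (x : subgs hg hD),
      ((gs_act (subgs hg hD) g x : orbitA a) = gs_act (orbitA a) g (x : orbitA a)).
    by move=> g x; apply: sig_eq.
  pose m := GMap me.
  exists a; exists (F_map F m w1).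
  rewrite -F_map_comp; congr (F_map F _ _); by apply: gmap_ext.
have hs2 : forall x : subgs hg hDc, exists y, List.In y (flist Dc s') /\
    exists g, x = gs_act (subgs hg hDc) g y.
  move=> [x hx]; case: (hs x) => y [ys [g exy]].
  have ys' : List.In y s'.
    case: ys => // eya; exfalso; apply: hx; exists g; by rewrite exy eya.
  have hy : Dc y.
    move=> [h eh]; apply: hx; exists (tg_mul g h); by rewrite exy eh gs_actM.
  exists (exist Dc y hy); split; first exact: flist_in.
  by exists g; apply: sig_eq.
have sz : size (flist Dc s') <= n.
  by apply: leq_trans (flist_size _ _) _.
case: (IH (subgs hg hDc) (flist Dc s') sz hs2 w2) => b [w3 <-].
have pf : forall t : orbitA b, exists g, proj1_sig (proj1_sig t) = gs_act A g (proj1_sig b).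
  move=> [t [g et]]; exists g; by rewrite /= et.
have me : forall g (t : orbitA b),
    (exist _ (proj1_sig (proj1_sig (gs_act (orbitA b) g t))) (pf _) : orbitA (proj1_sig b)) =
    gs_act (orbitA (proj1_sig b)) g (exist _ (proj1_sig (proj1_sig t)) (pf t)).
  by move=> g t; apply: sig_eq.
pose m := GMap me.
exists (proj1_sig b); exists (F_map F m w3).
rewrite -!F_map_comp; congr (F_map F _ _); by apply: gmap_ext.
Qed.

Lemma covering (A : gset G) (w : F A) :
  exists a (w' : F (orbitA a)), F_map F (orbitA_incl a) w' = w.
Proof.
case: (gs_fin_orbits A) => s hs.
exact: (covering_n (leqnn _) hs).
Qed.
End Exact2.


Section Hat.
Variables (G K : topGrp) (hG : is_pro_oligomorphic G) (hK : is_pro_oligomorphic K).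
Variables (F : functor G K) (hF : exact_functor F).
Variables (X : gset G) (hX : transitive_gset X).
Let hg := po_grp hG.
Let hk := po_grp hK.

Definition PX := prodgs hG hX hX.
Definition OX (a : PX) := orbitA a.
Definition o1X (a : PX) : gmap (OX a) X := gmap_comp (pfst hG hX hX) (orbitA_incl a).
Definition o2X (a : PX) : gmap (OX a) X := gmap_comp (psnd hG hX hX) (orbitA_incl a).
Definition hatX (a : PX) (u u' : F X) :=
  exists w : F (OX a), F_map F (o1X a) w = u /\ F_map F (o2X a) w = u'.

Lemma cover_pair (u u' : F X) : exists a, hatX a u u'.
Proof.
case: (prod_surj hG hF hX hX u u') => w [e1 e2].
case: (covering hG hK hF w) => a [w' ew].
exists a; exists w'; rewrite /o1X /o2X !F_map_comp ew; by split.
Qed.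

Lemma hat_map (a a' : PX) (m : gmap (OX a') (OX a)) :
  (forall t, o1X a (m t) = o1X a' t) -> (forall t, o2X a (m t) = o2X a' t) ->
  forall u u', hatX a' u u' -> hatX a u u'.
Proof.
move=> h1 h2 u u' [w [e1 e2]]; exists (F_map F m w).
rewrite -!F_map_comp.
have -> : gmap_comp (o1X a) m = o1X a' by apply: gmap_ext.
have -> : gmap_comp (o2X a) m = o2X a' by apply: gmap_ext.
by split.
Qed.

Lemma hat_diag1 (x : X) u u' : hatX ((x, x) : PX) u u' -> u = u'.
Proof.
move=> [w [<- <-]].
have -> // : o1X ((x, x) : PX) = o2X ((x, x) : PX).
apply: gmap_ext => -[p [g ep]] /=; by rewrite ep.
Qed.

Lemma hat_diag2 (x : X) u : hatX ((x, x) : PX) u u.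
Proof.
have pf : forall y : X, exists g, ((y, y) : PX) = gs_act PX g ((x, x) : PX).
  move=> y; case: hX => _ t; case: (t x y) => g <-; by exists g.
have me : forall g (y : X), (exist _ ((gs_act X g y, gs_act X g y) : PX) (pf _) : OX ((x, x) : PX))
   = gs_act (OX ((x, x) : PX)) g (exist _ ((y, y) : PX) (pf y)).
  by move=> g y; apply: sig_eq.
pose d := GMap me.
exists (F_map F d u); rewrite -!F_map_comp.
have -> : gmap_comp (o1X ((x, x) : PX)) d = gmap_id X by apply: gmap_ext.
have -> : gmap_comp (o2X ((x, x) : PX)) d = gmap_id X by apply: gmap_ext.
by rewrite F_map_id.
Qed.

Lemma hat_sym (x x' : X) u u' : hatX ((x, x') : PX) u u' -> hatX ((x', x) : PX) u' u.
Proof.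
have pf : forall t : OX ((x, x') : PX), exists g,
    (((proj1_sig t).2, (proj1_sig t).1) : PX) = gs_act PX g ((x', x) : PX).
  by move=> [[y y'] [g ep]] /=; exists g; move: ep => /= [] -> ->.
have me : forall g t, (exist _ (((proj1_sig (gs_act (OX ((x, x') : PX)) g t)).2,
      (proj1_sig (gs_act (OX ((x, x') : PX)) g t)).1) : PX) (pf _) : OX ((x', x) : PX))
   = gs_act (OX ((x', x) : PX)) g (exist _ (((proj1_sig t).2, (proj1_sig t).1) : PX) (pf t)).
  by move=> g t; apply: sig_eq.
pose m := GMap me.
move=> [w [e1 e2]]; exists (F_map F m w); rewrite -!F_map_comp.
have -> : gmap_comp (o1X ((x', x) : PX)) m = o2X ((x, x') : PX) by apply: gmap_ext.
have -> : gmap_comp (o2X ((x', x) : PX)) m = o1X ((x, x') : PX) by apply: gmap_ext.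
by split.
Qed.

Lemma hat_mono (a : PX) g u u' : hatX (gs_act PX g a) u u' -> hatX a u u'.
Proof.
have pf : forall t : OX (gs_act PX g a), exists h, proj1_sig t = gs_act PX h a.
  move=> [p [h ep]]; exists (tg_mul h g); by rewrite /= ep gs_actM.
have me : forall h t, (exist _ (proj1_sig (gs_act (OX (gs_act PX g a)) h t)) (pf _) : OX a)
   = gs_act (OX a) h (exist _ (proj1_sig t) (pf t)).
  by move=> h t; apply: sig_eq.
by apply: (hat_map (m := GMap me)).
Qed.

Lemma hat_decomp (x1 x2 x3 : X) u u'' : hatX ((x1, x3) : PX) u u'' ->
  exists u', hatX ((x1, x2) : PX) u u' /\ hatX ((x2, x3) : PX) u' u''.
Proof.
move=> [w [e1 e2]].
pose p0 : PX * X := (((x1, x2) : PX), x3).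
pose T3 := orbitP p0.
have pf13 : forall t : T3, exists g,
    (((proj1_sig t).1.1, (proj1_sig t).2) : PX) = gs_act PX g ((x1, x3) : PX).
  by move=> [[[y1 y2] y3] [g ep]] /=; exists g; move: ep => /= [] -> _ ->.
have pf12 : forall t : T3, exists g, (proj1_sig t).1 = gs_act PX g ((x1, x2) : PX).
  by move=> [[[y1 y2] y3] [g ep]] /=; exists g; move: ep => /= [] -> -> _.
have pf23 : forall t : T3, exists g,
    (((proj1_sig t).1.2, (proj1_sig t).2) : PX) = gs_act PX g ((x2, x3) : PX).
  by move=> [[[y1 y2] y3] [g ep]] /=; exists g; move: ep => /= [] _ -> ->.
have me13 : forall g t, (exist _ _ (pf13 (gs_act T3 g t)) : OX ((x1, x3) : PX))
   = gs_act (OX ((x1, x3) : PX)) g (exist _ _ (pf13 t)) by move=> g t; apply: sig_eq.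
have me12 : forall g t, (exist _ _ (pf12 (gs_act T3 g t)) : OX ((x1, x2) : PX))
   = gs_act (OX ((x1, x2) : PX)) g (exist _ _ (pf12 t)) by move=> g t; apply: sig_eq.
have me23 : forall g t, (exist _ _ (pf23 (gs_act T3 g t)) : OX ((x2, x3) : PX))
   = gs_act (OX ((x2, x3) : PX)) g (exist _ _ (pf23 t)) by move=> g t; apply: sig_eq.
pose f13 := GMap me13; pose f12 := GMap me12; pose f23 := GMap me23.
have s13 : forall y, exists t, f13 t = y.
  move=> [[y1 y3] [g ep]].
  have ht : exists h, (((gs_act X g x1, gs_act X g x2), gs_act X g x3) : PX * X)
                      = prod_act h p0 by exists g.
  exists (exist (fun y : PX * X => exists h, y = prod_act h p0) _ ht : T3); apply: sig_eq => /=; by rewrite ep.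
case: (surj_pres hK hF s13 w) => t et.
exists (F_map F (gmap_comp (o1X _) f23) t); split.
  exists (F_map F f12 t); rewrite -!F_map_comp; split.
    rewrite -e1 -et -F_map_comp; congr (F_map F _ _); by apply: gmap_ext.
  congr (F_map F _ _); by apply: gmap_ext.
exists (F_map F f23 t); rewrite -!F_map_comp; split => //.
rewrite -e2 -et -F_map_comp; congr (F_map F _ _); by apply: gmap_ext.
Qed.

End Hat.


Section Kernel.
Variables (G K : topGrp) (hG : is_pro_oligomorphic G) (hK : is_pro_oligomorphic K).
Variables (F : functor G K) (hF : exact_functor F).
Variables (X : gset G) (hX : transitive_gset X).
Let hg := po_grp hG.
Let hk := po_grp hK.
Variables (R : X -> X -> Prop) (Rrefl : forall x, R x x) (Rsym : forall x y, R x y -> R y x)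
  (Rtr : forall x y z, R x y -> R y z -> R x z)
  (Rinv : forall g x y, R x y -> R (gs_act X g x) (gs_act X g y)).
Variable (EX : F X -> F X -> Prop).
Hypothesis hA : forall a : PX hG hX, R a.1 a.2 -> forall u u', @hatX G K hG F X hX a u u' -> EX u u'.
Hypothesis hB : forall (a : PX hG hX) u u', @hatX G K hG F X hX a u u' -> EX u u' -> R a.1 a.2.

Definition htrX (x : X) (g : G) := transl_open hG g (gs_open_stab x).
Definition XQ := quotgs hg Rrefl Rsym Rtr Rinv htrX.
Definition pXQ : gmap X XQ := qmap hg Rrefl Rsym Rtr Rinv htrX.

Lemma kernel_eq u u' : F_map F pXQ u = F_map F pXQ u' <-> EX u u'.
Proof.
have hRi : forall g (p : PX hG hX), (fun p : PX hG hX => R p.1 p.2) p ->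
    (fun p : PX hG hX => R p.1 p.2) (gs_act (PX hG hX) g p).
  by move=> g [x y] /= h; apply: Rinv.
pose Rgs := subgs hg hRi.
pose r1 : gmap Rgs X := gmap_comp (pfst hG hX hX) (sub_incl hg hRi).
pose r2 : gmap Rgs X := gmap_comp (psnd hG hX hX) (sub_incl hg hRi).
have pb : is_pullback pXQ pXQ r1 r2.
  split.
    move=> [[x y] h]; exact: (proj2 (qmap_eq hg Rrefl Rsym Rtr Rinv htrX _ _) h).
  move=> T a b hab.
  have hp : forall t, (fun p : PX hG hX => R p.1 p.2) ((a t, b t) : PX hG hX).
    move=> t; exact: (proj1 (qmap_eq hg Rrefl Rsym Rtr Rinv htrX _ _) (hab t)).
  have ue : forall g t, (exist _ _ (hp (gs_act T g t)) : Rgs) = gs_act Rgs g (exist _ _ (hp t)).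
    by move=> g t; apply: sig_eq; rewrite /= !gm_equiv.
  exists (GMap ue); split => //.
  move=> u0 h1 h2 t; apply: sig_eq => /=; rewrite -h1 -h2 /=.
  by case: (proj1_sig (u0 t)).
split.
  move=> e.
  case: hF => [[_ /(_ _ _ _ _ _ _ _ _ pb) pbF] _].
  case: (pullback_elt pbF e) => r [e1 e2].
  case: (covering hG hK hF r) => r0 [r' er].
  have pf : forall t : orbitA r0, exists g,
      proj1_sig (proj1_sig t) = gs_act (PX hG hX) g (proj1_sig r0).
    move=> [t [g et]]; exists g; by rewrite /= et.
  have me : forall g t, (exist _ _ (pf (gs_act (orbitA r0) g t)) : @OX G hG X hX (proj1_sig r0))
     = gs_act (@OX G hG X hX (proj1_sig r0)) g (exist _ _ (pf t)) by move=> g t; apply: sig_eq.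
  pose m := GMap me.
  apply: (hA (proj2_sig r0)).
  exists (F_map F m r'); rewrite -e1 -e2 -er -!F_map_comp; split;
    congr (F_map F _ _); by apply: gmap_ext.
move=> hE.
case: (cover_pair hG hK hF hX u u') => a [w [e1 e2]].
have ra := hB (ex_intro _ w (conj e1 e2)) hE.
rewrite -e1 -e2 -!F_map_comp; congr (F_map F _ _); apply: gmap_ext.
move=> [[y y'] [g ey]] /=.
have [-> ->] : y = gs_act X g a.1 /\ y' = gs_act X g a.2.
  by move: ey; rewrite [a]surjective_pairing => -[-> ->].
apply: (proj2 (qmap_eq hg Rrefl Rsym Rtr Rinv htrX _ _)).
by apply: Rinv.
Qed.

Lemma pXQ_surj (y : XQ) : exists x, pXQ x = y.
Proof. exact: qmap_surj. Qed.
End Kernel.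


Lemma prod_grp (G H : topGrp) : grp_ax G -> grp_ax H -> grp_ax (prod_topGrp G H).
Proof.
move=> [mA [m1 mV]] [nA [n1 nV]]; split; [|split].
- by move=> [a b] [c d] [e f] /=; rewrite mA nA.
- by move=> [a b] /=; rewrite m1 n1.
- by move=> [a b] /=; rewrite mV nV.
Qed.

Section XY.
Variables (G H : topGrp) (hG : is_pro_oligomorphic G) (hH : is_pro_oligomorphic H).
Variables (X : gset G) (Y : gset H) (hX : transitive_gset X) (hY : transitive_gset Y).

Definition XYgs : gset (prod_topGrp G H).
Proof.
refine (@GSet (prod_topGrp G H) (X * Y)%type (@prod2_act G H X Y) _ _ _ _).
- by move=> [x y]; rewrite /prod2_act /= !gs_act1.
- by move=> [g h] [g' h'] [x y]; rewrite /prod2_act /= !gs_actM.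
- move=> [x y].
  have -> : [set gh : prod_topGrp G H | prod2_act gh (x, y) = (x, y)] =
    [set g | gs_act X g x = x] `*` [set h | gs_act Y h y = y].
    apply: funext => -[g h]; apply: propext; rewrite /prod2_act /=; split.
      by move=> [-> ->].
    by move=> [/= -> ->].
  by apply: open_setX'; apply: gs_open_stab.
- case: hX => [[x0 _] tX]; case: hY => [[y0 _] tY].
  exists [:: (x0, y0)] => -[x y]; exists (x0, y0); split; first by left.
  case: (tX x0 x) => g <-; case: (tY y0 y) => h <-.
  by exists (g, h).
Defined.

Lemma XYgs_trans : transitive_gset XYgs.
Proof.
case: hX => [[x0 _] tX]; case: hY => [[y0 _] tY].
split; first by exists ((x0, y0) : XYgs).
move=> [x y] [x' y']; case: (tX x x') => g <-; case: (tY y y') => h <-.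
by exists (g, h).
Qed.

Lemma htrXY (p : XYgs) (gh : prod_topGrp G H) :
  open (transl gh [set d | gs_act XYgs d p = p]).
Proof.
case: p => x y; case: gh => g h.
have -> : transl ((g, h) : prod_topGrp G H) [set d | gs_act XYgs d ((x, y) : XYgs) = (x, y)] =
   transl g [set d | gs_act X d x = x] `*` transl h [set d | gs_act Y d y = y].
  apply: funext => -[d1 d2]; apply: propext; split.
    move=> [[v1 v2] [/= ev ed]]; case: ev => e1 e2; case: ed => e3 e4; rewrite /= e3 e4.
    by split; [exists v1 | exists v2].
  move=> [[v1 [e1 f1]] [v2 [e2 f2]]]; simpl in *; rewrite f1 f2.
  by exists (v1, v2); split => //=; rewrite /prod2_act /= e1 e2.
by apply: open_setX'; apply: transl_open => //; apply: gs_open_stab.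
Qed.
End XY.


Section Main.
Variables (G H K : topGrp)
  (hG : is_pro_oligomorphic G) (hH : is_pro_oligomorphic H)
  (hK : is_pro_oligomorphic K) (hsplit : split_group G)
  (Phi : functor G K) (Psi : functor H K)
  (hPhi : exact_functor Phi) (hPsi : exact_functor Psi)
  (htrans : forall (X : gset G) (Y : gset H), transitive_gset X -> transitive_gset Y ->
     transitive_action (@prod_act K (Phi X) (Psi Y)))
  (X : gset G) (Y : gset H) (hX : transitive_gset X) (hY : transitive_gset Y)
  (Z : gset K) (q : Phi X * Psi Y -> Z)
  (hq_surj : forall z : Z, exists p, q p = z)
  (hq_equiv : forall k p, q (prod_act k p) = gs_act Z k (q p)).

Let hg := po_grp hG.
Let hh := po_grp hH.
Let hk := po_grp hK.
Let PXA := PX hG hX.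
Let PXB := PX hH hY.
Let hatA := @hatX G K hG Phi X hX.
Let hatB := @hatX H K hH Psi Y hY.

Definition Block (a : PXA) (b : PXB) := forall u u' v v', hatA a u u' -> hatB b v v' ->
  q (u, v) = q (u', v').

Lemma block_trans a b u0 u0' v0 v0' : hatA a u0 u0' -> hatB b v0 v0' ->
  q (u0, v0) = q (u0', v0') -> Block a b.
Proof.
move=> [w10 [e1 e2]] [w20 [f1 f2]] e0 u u' v v' [w1 [g1 g2]] [w2 [k1 k2]].
have tr := htrans (@orbgs_trans G PXA _ (@gs_act1 G PXA) (@gs_actM G PXA) (@gs_open_stab G PXA) a hg) (@orbgs_trans H PXB _ (@gs_act1 H PXB) (@gs_actM H PXB) (@gs_open_stab H PXB) b hh).
case: tr => _ tr; case: (tr (w10, w20) (w1, w2)) => k ek.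
case: ek => ew1 ew2.
rewrite -g1 -g2 -k1 -k2 -ew1 -ew2 !gm_equiv e1 e2 f1 f2.
have h1 := hq_equiv k (u0, v0); have h2 := hq_equiv k (u0', v0').
rewrite /prod_act /= in h1 h2.
by rewrite h1 h2 e0.
Qed.

Definition EX u u' := forall v, q (u, v) = q (u', v).
Definition EY v v' := forall u, q (u, v) = q (u, v').

Definition RX (x x' : X) := forall u u', hatA ((x, x') : PXA) u u' -> EX u u'.
Definition RY (y y' : Y) := forall v v', hatB ((y, y') : PXB) v v' -> EY v v'.

Lemma RX_refl x : RX x x.
Proof. by move=> u u' /hat_diag1 ->. Qed.
Lemma RX_sym x y : RX x y -> RX y x.
Proof. by move=> h u u' /hat_sym /h e v; rewrite e. Qed.
Lemma RX_tr x y z : RX x y -> RX y z -> RX x z.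
Proof.
move=> h1 h2 u u'' /(hat_decomp hK hPhi y) [u' [/h1 e1 /h2 e2]] v.
by rewrite e1 e2.
Qed.
Lemma RX_inv g x y : RX x y -> RX (gs_act X g x) (gs_act X g y).
Proof. move=> h u u' hu; apply: h; exact: (@hat_mono G K hG Phi X hX (x, y) g u u' hu). Qed.

Lemma RY_refl y : RY y y.
Proof. by move=> v v' /hat_diag1 ->. Qed.
Lemma RY_sym x y : RY x y -> RY y x.
Proof. by move=> h v v' /hat_sym /h e u; rewrite e. Qed.
Lemma RY_tr x y z : RY x y -> RY y z -> RY x z.
Proof.
move=> h1 h2 v v'' /(hat_decomp hK hPsi y) [v' [/h1 e1 /h2 e2]] u.
by rewrite e1 e2.
Qed.
Lemma RY_inv g x y : RY x y -> RY (gs_act Y g x) (gs_act Y g y).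
Proof. move=> h v v' hv; apply: h; exact: (@hat_mono H K hH Psi Y hY (x, y) g v v' hv). Qed.

Lemma nonempty : exists (u0 : Phi X) (v0 : Psi Y), True.
Proof. by case: (htrans hX hY) => -[[u v] _] _; exists u, v. Qed.

Lemma hBX (a : PXA) u u' : hatA a u u' -> EX u u' -> RX a.1 a.2.
Proof.
move=> ha hE; case: nonempty => u0 [v0 _].
case: hY => [[y0 _] _].
have bl := block_trans ha (hat_diag2 hH hY y0 v0) (hE v0).
move=> u1 u1' h1 v; apply: (bl u1 u1' v v) => //.
  by rewrite [a]surjective_pairing.
exact: hat_diag2.
Qed.

Lemma hBY (b : PXB) v v' : hatB b v v' -> EY v v' -> RY b.1 b.2.
Proof.
move=> hb hE; case: nonempty => u0 [v0 _].
case: hX => [[x0 _] _].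
have bl := block_trans (hat_diag2 hG hX x0 u0) hb (hE u0).
move=> v1 v1' h1 u; apply: (bl u u v1 v1') => //.
  exact: hat_diag2.
by rewrite [b]surjective_pairing.
Qed.

Lemma hAX (a : PXA) : RX a.1 a.2 -> forall u u', hatA a u u' -> EX u u'.
Proof. by move=> h u u'; rewrite [a]surjective_pairing; apply: h. Qed.
Lemma hAY (b : PXB) : RY b.1 b.2 -> forall v v', hatB b v v' -> EY v v'.
Proof. by move=> h v v'; rewrite [b]surjective_pairing; apply: h. Qed.

Definition Srel (p p' : XYgs hX hY) := Block ((p.1, p'.1) : PXA) ((p.2, p'.2) : PXB).

Lemma Srel_refl p : Srel p p.
Proof. by move=> u u' v v' /hat_diag1 -> /hat_diag1 ->. Qed.
Lemma Srel_sym p p' : Srel p p' -> Srel p' p.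
Proof. by move=> h u u' v v' /hat_sym hu /hat_sym hv; rewrite (h _ _ _ _ hu hv). Qed.
Lemma Srel_tr p1 p2 p3 : Srel p1 p2 -> Srel p2 p3 -> Srel p1 p3.
Proof.
move=> h1 h2 u u'' v v'' /(hat_decomp hK hPhi p2.1) [u' [hu1 hu2]]
  /(hat_decomp hK hPsi p2.2) [v' [hv1 hv2]].
by rewrite (h1 _ _ _ _ hu1 hv1) (h2 _ _ _ _ hu2 hv2).
Qed.
Lemma Srel_inv (gh : prod_topGrp G H) p p' : Srel p p' ->
  Srel (gs_act (XYgs hX hY) gh p) (gs_act (XYgs hX hY) gh p').
Proof.
case: gh => g h; case: p => x y; case: p' => x' y' hs u u' v v' hu hv.
apply: hs.
  exact: (@hat_mono G K hG Phi X hX (x, x') g u u' hu).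
exact: (@hat_mono H K hH Psi Y hY (y, y') h v v' hv).
Qed.

Let hgh := prod_grp hg hh.
Let htrL : forall (p : XYgs hX hY) (gh : prod_topGrp G H),
   open (transl gh [set d | gs_act (XYgs hX hY) d p = p]) :=
  fun p gh => @htrXY G H hG hH X Y hX hY p gh.
Definition Tgs := quotgs hgh Srel_refl Srel_sym Srel_tr Srel_inv htrL.
Definition cT : gmap (XYgs hX hY) Tgs := qmap hgh Srel_refl Srel_sym Srel_tr Srel_inv htrL.

Lemma Tgs_trans : transitive_gset Tgs.
Proof.
case: (XYgs_trans hX hY) => [[p0 _] tr].
split; first by exists (cT p0).
move=> P P'; case: (qmap_surj P) => p <-; case: (qmap_surj P') => p' <-.
case: (tr p p') => gh <-; exists gh; by rewrite gm_equiv.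
Qed.

Lemma split_S x y x' y' : Srel (x, y) (x', y') -> Srel (x, y) (x', y) /\ Srel (x, y) (x, y').
Proof.
move=> hs.
case: (hsplit hH Tgs_trans) => X2 [Y2 [_ [_ [e [be eeq]]]]].
have inj := bij_inj be.
pose al := fun p => (e (cT p)).1.
pose be' := fun p => (e (cT p)).2.
have tX := hX; have tY := hY.
case: tY => _ tY; case: tX => _ tX.
have alY : forall x1 y1 y2, al (x1, y1) = al (x1, y2).
  move=> x1 y1 y2; case: (tY y1 y2) => h <-.
  have -> : ((x1, gs_act Y h y1) : XYgs hX hY) =
            gs_act (XYgs hX hY) ((tg_one G, h) : prod_topGrp G H) (x1, y1).
    by rewrite /= /prod2_act /= gs_act1.
  by rewrite /al gm_equiv eeq /prod2_act /= gs_act1.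
have beX : forall x1 x2 y1, be' (x1, y1) = be' (x2, y1).
  move=> x1 x2 y1; case: (tX x1 x2) => g <-.
  have -> : ((gs_act X g x1, y1) : XYgs hX hY) =
            gs_act (XYgs hX hY) ((g, tg_one H) : prod_topGrp G H) (x1, y1).
    by rewrite /= /prod2_act /= gs_act1.
  by rewrite /be' gm_equiv eeq /prod2_act /= gs_act1.
have ec : cT (x, y) = cT (x', y') by apply/qmap_eq.
have ea : al (x, y) = al (x', y') by rewrite /al ec.
have eb : be' (x, y) = be' (x', y') by rewrite /be' ec.
split.
  apply: Srel_sym; apply/(qmap_eq hgh Srel_refl Srel_sym Srel_tr Srel_inv htrL).
  apply: inj; rewrite [e (cT (x', y))]surjective_pairing [e (cT (x, y))]surjective_pairing.
  rewrite -/(al (x', y)) -/(be' (x', y)) -/(al (x, y)) -/(be' (x, y)).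
  by rewrite (alY x' y y') -ea (beX x' x y).
apply: Srel_sym; apply/(qmap_eq hgh Srel_refl Srel_sym Srel_tr Srel_inv htrL).
apply: inj; rewrite [e (cT (x, y'))]surjective_pairing [e (cT (x, y))]surjective_pairing.
rewrite -/(al (x, y')) -/(be' (x, y')) -/(al (x, y)) -/(be' (x, y)).
by rewrite (beX x x' y') -eb (alY x y' y).
Qed.

Lemma K1 u v u' v' : q (u, v) = q (u', v') -> EX u u' /\ EY v v'.
Proof.
move=> e.
case: (cover_pair hG hK hPhi hX u u') => a ha.
case: (cover_pair hH hK hPsi hY v v') => b hb.
have bl := block_trans ha hb e.
have hs : Srel (a.1, b.1) (a.2, b.2).
  by rewrite /Srel /= -!surjective_pairing.
case: (split_S hs) => s1 s2; split.
  move=> v1; apply: (s1 u u' v1 v1) => /=.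
    by rewrite -surjective_pairing.
  exact: hat_diag2.
move=> u1; apply: (s2 u1 u1 v v') => /=.
  exact: hat_diag2.
by rewrite -surjective_pairing.
Qed.

Lemma K2 u v u' v' : EX u u' -> EY v v' -> q (u, v) = q (u', v').
Proof. by move=> h1 h2; rewrite h1 h2. Qed.

Definition X' := XQ hG RX_refl RX_sym RX_tr RX_inv.
Definition pX : gmap X X' := pXQ hG RX_refl RX_sym RX_tr RX_inv.
Definition Y' := XQ hH RY_refl RY_sym RY_tr RY_inv.
Definition pY : gmap Y Y' := pXQ hH RY_refl RY_sym RY_tr RY_inv.

Lemma kerX u u' : F_map Phi pX u = F_map Phi pX u' <-> EX u u'.
Proof. exact: (kernel_eq hK hPhi RX_refl RX_sym RX_tr RX_inv (@hAX) (@hBX) u u'). Qed.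
Lemma kerY v v' : F_map Psi pY v = F_map Psi pY v' <-> EY v v'.
Proof. exact: (kernel_eq hK hPsi RY_refl RY_sym RY_tr RY_inv (@hAY) (@hBY) v v'). Qed.

Definition phi (p : Phi X * Psi Y) : Phi X' * Psi Y' :=
  (F_map Phi pX p.1, F_map Psi pY p.2).

Lemma phi_ker p p' : q p = q p' <-> phi p = phi p'.
Proof.
case: p => u v; case: p' => u' v'; split.
  by move=> /K1 [/kerX e1 /kerY e2]; rewrite /phi /= e1 e2.
by move=> [/kerX e1 /kerY e2]; apply: K2.
Qed.

Lemma phi_surj t : exists p, phi p = t.
Proof.
case: t => a b.
case: (surj_pres hK hPhi (@pXQ_surj _ _ _ _ _ _ _ _) a) => u <-.
case: (surj_pres hK hPsi (@pXQ_surj _ _ _ _ _ _ _ _) b) => v <-.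
by exists (u, v).
Qed.

Lemma main_conclusion :
  exists (X' : gset G) (pX : gmap X X'),
    (forall x' : X', exists x, pX x = x') /\
  exists (Y' : gset H) (pY : gmap Y Y'),
    (forall y' : Y', exists y, pY y = y') /\
  exists e : Z -> Phi X' * Psi Y', bijective e /\
    forall k z, e (gs_act Z k z) = prod_act k (e z).
Proof.
exists X', pX; split; first exact: pXQ_surj.
exists Y', pY; split; first exact: pXQ_surj.
pose pre := fun z => proj1_sig (cid (hq_surj z)).
have preE : forall z, q (pre z) = z by move=> z; rewrite /pre; case: cid.
pose pre' := fun t => proj1_sig (cid (phi_surj t)).
have pre'E : forall t, phi (pre' t) = t by move=> t; rewrite /pre'; case: cid.
exists (fun z => phi (pre z)); split.
  exists (fun t => q (pre' t)).
    move=> z; rewrite -[RHS]preE; apply/phi_ker; by rewrite pre'E.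
  move=> t; rewrite -[RHS]pre'E; apply/phi_ker; by rewrite preE.
move=> k z.
have : q (pre (gs_act Z k z)) = q (prod_act k (pre z)) by rewrite preE hq_equiv preE.
move=> /phi_ker ->.
case: (pre z) => u v; by rewrite /phi /prod_act /= !gm_equiv.
Qed.
End Main.

Unset Implicit Arguments.
Local Close Scope classical_set_scope.

Theorem proposition5p7 (G H K : topGrp)
  (hG : is_pro_oligomorphic G) (hH : is_pro_oligomorphic H)
  (hK : is_pro_oligomorphic K) (hsplit : split_group G)
  (Phi : functor G K) (Psi : functor H K)
  (hPhi : exact_functor Phi) (hPsi : exact_functor Psi)
  (htrans : forall (X : gset G) (Y : gset H), transitive_gset X -> transitive_gset Y ->
     transitive_action (@prod_act K (Phi X) (Psi Y)))
  (X : gset G) (Y : gset H) (hX : transitive_gset X) (hY : transitive_gset Y)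
  (Z : gset K) (q : Phi X * Psi Y -> Z)
  (hq_surj : forall z : Z, exists p, q p = z)
  (hq_equiv : forall k p, q (prod_act k p) = gs_act Z k (q p)) :
  exists (X' : gset G) (pX : gmap X X'),
    (forall x' : X', exists x, pX x = x') /\
  exists (Y' : gset H) (pY : gmap Y Y'),
    (forall y' : Y', exists y, pY y = y') /\
  exists e : Z -> Phi X' * Psi Y', bijective e /\
    forall k z, e (gs_act Z k z) = prod_act k (e z).
Proof. exact: (main_conclusion hG hH hK hsplit hPhi hPsi htrans hX hY hq_surj hq_equiv). Qed.
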